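(* Let $\langle\mathcal G,\widehat{\mathcal P}\rangle$ be a $2\frac12$-player parity game with $\widehat{\mathcal P}=\langle\widehat B_1,\dots,\widehat B_\ell\rangle$, and let $v^0$ be a vertex of $\mathcal G$. Suppose $\pi_0^*$ is a deterministic memoryless strategy of Player 0 such that $\inf_{\pi_1}P_{v^0}^{\pi_0^*,\pi_1}(\mathcal G\models\mathit{Parity}(\widehat{\mathcal P}))=1$, the infimum ranging over all strategies $\pi_1$ of Player 1. Then for every finite run $v^0\dots v^n\in V^*$ for which there exists a Player 1 strategy $\pi_1$ with $P_{v^0}^{\pi_0^*,\pi_1}(\mathcal G\models v^0\dots v^n)>0$, and for every odd $i\in\{1,\dots,\ell\}$, $$v^n\in\widehat B_i\implies\inf_{\pi_1}P_{v^n}^{\pi_0^*,\pi_1}\Big(\mathcal G\models\lozenge\lozenge\big(\square\neg\widehat B_i\vee\textstyle\bigvee_{j\text{ even},\,j\in\{i+1,\dots,\ell\}}\widehat B_j\big)\Big)=1.$$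
   Context: A $2\frac12$-player game graph is $\mathcal G=\langle V,E,\langle V_0,V_1,V_r\rangle\rangle$ with $V$ finite, $E\subseteq V\times V$, and $V_0,V_1,V_r$ a partition of $V$; at $V_0$ (resp. $V_1$) vertices Player 0 (resp. Player 1) chooses a successor, at $V_r$ vertices the successor is chosen uniformly at random among the successors. Strategies of Player $i$ are maps $\pi_i:V^*V_i\to\mathit{Dist}(V)$ supported on successors of the last vertex; deterministic memoryless strategies choose a single successor depending only on the current vertex. $P_v^{\pi_0,\pi_1}$ is the induced probability measure on infinite runs from $v$, and $P_{v^0}^{\pi_0,\pi_1}(\mathcal G\models v^0\dots v^n)$ is the probability that the run begins with $v^0\dots v^n$. A $2\frac12$-player parity game is $\langle\mathcal G,\widehat{\mathcal P}\rangle$ with $\widehat{\mathcal P}=\langle\widehat B_1,\dots,\widehat B_\ell\rangle$ disjoint (possibly empty) subsets of $V$, such that every infinite run visits some nonempty $\widehat B_i$ infinitely often. A run satisfies $\mathit{Parity}(\widehat{\mathcal P})$ iff for every odd $i$, if it visits $\widehat B_i$ infinitely often then it visits $\widehat B_j$ infinitely often for some even $j\in\{i+1,\dots,\ell\}$. Temporal operators $\lozenge,\square$ have standard LTL semantics on runs. *)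

(* Defs.v *)
From HB Require Import structures.
From mathcomp Require Import all_boot all_order all_algebra.
From mathcomp Require Import all_classical all_reals all_analysis.
Set Implicit Arguments. Unset Strict Implicit. Unset Printing Implicit Defensive.
Import Order.TTheory GRing.Theory Num.Theory numFieldNormedType.Exports.
Local Open Scope ring_scope.

Section ParityGames.
Variables (R : realType) (V : finType).

Definition game_graph (E : rel V) (V0 V1 Vr : {set V}) : Prop :=
  [/\ [disjoint V0 & V1], [disjoint V0 & Vr], [disjoint V1 & Vr],
      (V0 :|: V1 :|: Vr = [set: V])%SET & forall v, exists w, E v w].

Definition inf_run (E : rel V) (r : nat -> V) : Prop := forall k, E (r k) (r k.+1).

Definition inf_often (r : nat -> V) (A : {set V}) : Prop :=
  forall N, exists m, (N <= m)%N /\ r m \in A.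

(** Priority sets B_1, ..., B_l (indices 1..l meaningful), pairwise disjoint,
    and every infinite run visits some nonempty B_i infinitely often. *)
Definition parity_condition (E : rel V) (l : nat) (B : nat -> {set V}) : Prop :=
  (forall i j, (1 <= i <= l)%N -> (1 <= j <= l)%N -> i != j -> [disjoint B i & B j])
  /\ (forall r, inf_run E r ->
        exists i, [/\ (1 <= i <= l)%N, B i != finset.set0 & inf_often r (B i)]).

Definition Parity (l : nat) (B : nat -> {set V}) : set (nat -> V) :=
  [set r | forall i, (1 <= i <= l)%N -> odd i -> inf_often r (B i) ->
             exists j, [/\ (i < j <= l)%N, ~~ odd j & inf_often r (B j)]].

(** Strategies of a player owning vertices Vi: a history is a nonempty
    sequence [rcons h x] (x = current vertex); it maps to a distribution
    on V supported on successors of x. *)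
Definition strategy (E : rel V) (Vi : {set V}) (pi : seq V -> V -> R) : Prop :=
  forall h x, x \in Vi ->
    [/\ forall w, 0 <= pi (rcons h x) w,
        forall w, pi (rcons h x) w != 0 -> E x w
      & \sum_(w : V) pi (rcons h x) w = 1].

Definition det_memoryless (E : rel V) (V0 : {set V}) (pi : seq V -> V -> R) : Prop :=
  exists sigma : V -> V,
    (forall x, x \in V0 -> E x (sigma x)) /\
    (forall h x w, x \in V0 -> pi (rcons h x) w = (w == sigma x)%:R).

Definition step (E : rel V) (V0 V1 : {set V}) (pi0 pi1 : seq V -> V -> R)
  (h : seq V) (x w : V) : R :=
  if x \in V0 then pi0 (rcons h x) w
  else if x \in V1 then pi1 (rcons h x) w
  else (E x w)%:R / #|[set y | E x y]%SET|%:R.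

Definition cyl (w : seq V) : set (nat -> V) :=
  [set r | forall k, (k < size w)%N -> r k = nth (r k) w k].

Definition cylprob (E : rel V) (V0 V1 : {set V}) (pi0 pi1 : seq V -> V -> R)
  (v : V) (w : seq V) : R :=
  match w with
  | [::] => 1
  | x0 :: _ => (x0 == v)%:R *
      \prod_(k < (size w).-1)
         step E V0 V1 pi0 pi1 (take k w) (nth x0 w k) (nth x0 w k.+1)
  end.

Local Open Scope classical_set_scope.
Definition run_measurable : set (set (nat -> V)) := <<s [set cyl w | w in [set: seq V]] >>.

(** P is the probability measure P_v^{pi0,pi1} on infinite runs: a
    countably additive probability on the cylinder sigma-algebra with the
    prescribed cylinder probabilities (it exists and is unique). *)
Definition run_measure (E : rel V) (V0 V1 : {set V}) (pi0 pi1 : seq V -> V -> R)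
  (v : V) (P : set (nat -> V) -> R) : Prop :=
  [/\ P setT = 1,
      forall A, run_measurable A -> 0 <= P A,
      forall F : nat -> set (nat -> V), (forall k, run_measurable (F k)) ->
        trivIset setT F ->
        (fun n => \sum_(0 <= k < n) P (F k)) @ \oo --> P (\bigcup_k F k)
    & forall w, P (cyl w) = cylprob E V0 V1 pi0 pi1 v w].

Definition prob_values (E : rel V) (V0 V1 : {set V}) (pi0 : seq V -> V -> R)
  (v : V) (A : set (nat -> V)) : set R :=
  [set x | exists pi1, strategy E V1 pi1 /\
             exists P, run_measure E V0 V1 pi0 pi1 v P /\ x = P A].

(** The event <> <> ( [] ~B_i \/ \/_{j even, i<j<=l} B_j ) (LTL, at position 0). *)
Definition lemma3_event (l : nat) (B : nat -> {set V}) (i : nat) : set (nat -> V) :=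
  [set r | exists k, exists k', (k <= k')%N /\
     ((forall m, (k' <= m)%N -> r m \notin B i) \/
      exists j, [/\ (i < j <= l)%N, ~~ odd j & r k' \in B j])].

End ParityGames.

(* Main.v *)
Require Import Defs.
From HB Require Import structures.
From mathcomp Require Import all_boot all_order all_algebra.
From mathcomp Require Import all_classical all_reals all_analysis.
From mathcomp Require Import zify.
Import Order.TTheory GRing.Theory Num.Theory numFieldNormedType.Exports.
Local Open Scope classical_set_scope.
Local Open Scope ring_scope.
Set Implicit Arguments. Unset Strict Implicit.

Section Meas.
Variable V : finType.
Local Notation M := (@run_measurable V).

Lemma mS : sigma_algebra setT M.
Proof. exact: smallest_sigma_algebra. Qed.

Lemma m0 : M set0.
Proof. by case: mS. Qed.

Lemma mC A : M A -> M (~` A).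
Proof. by case: mS => _ h _ /h; rewrite setTD. Qed.

Lemma mU (F : nat -> set (nat -> V)) : (forall n, M (F n)) -> M (\bigcup_n F n).
Proof. by case: mS => _ _ h /h. Qed.

Lemma mT : M setT.
Proof. by rewrite -setC0; apply: mC; apply: m0. Qed.

Lemma mI (F : nat -> set (nat -> V)) : (forall n, M (F n)) -> M (\bigcap_n F n).
Proof.
move=> h; rewrite -[X in M X]setCK setC_bigcap; apply: mC; apply: mU => n.
exact: mC.
Qed.

Lemma mU2 A B : M A -> M B -> M (A `|` B).
Proof.
move=> hA hB; have -> : A `|` B = \bigcup_n (if n == 0%N then A else B).
  apply/seteqP; split => x.
    by case=> h; [exists 0%N | exists 1%N].
  by case=> n _; case: ifP => _ h; [left|right].
by apply: mU => n; case: ifP.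
Qed.

Lemma mI2 A B : M A -> M B -> M (A `&` B).
Proof.
move=> hA hB; rewrite -[X in M X]setCK setCI; apply: mC; apply: mU2; exact: mC.
Qed.

Lemma mD A B : M A -> M B -> M (A `\` B).
Proof. by move=> hA hB; apply: mI2 => //; apply: mC. Qed.

Lemma mcyl w : M (cyl w).
Proof. by apply: sub_sigma_algebra; exists w. Qed.

Lemma cylE (w : seq V) d r : cyl w r <-> forall k, (k < size w)%N -> r k = nth d w k.
Proof.
split=> h k hk; rewrite h //; exact: set_nth_default.
Qed.

Definition at_ (m : nat) (B : {set V}) : set (nat -> V) := [set r | r m \in B].

Lemma mat m B : M (at_ m B).
Proof.
pose F k : set (nat -> V) := match (@unpickle (seq V) k) with
  | Some (y :: u') => if (size (y :: u') == m.+1) && (nth y (y :: u') m \in B) then cyl (y :: u') else set0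
  | _ => set0 end.
have -> : at_ m B = \bigcup_k F k.
  apply/seteqP; split => r.
    rewrite /at_ /= => hr.
    have hs := size_mkseq r m.+1.
    have hn k : (k < m.+1)%N -> forall d, nth d (mkseq r m.+1) k = r k.
      by move=> hk d; rewrite nth_mkseq.
    case hu: (mkseq r m.+1) hs hn => [|y u'] // hs hn.
    exists (pickle (y :: u')) => //.
    rewrite /F pickleK hs eqxx /=.
    have -> : nth y (y :: u') m = r m by rewrite hn.
    rewrite hr /=.
    by apply: (proj2 (cylE _ y r)) => k; rewrite hs => hk; rewrite hn.
  case=> k _; rewrite /F; case: (unpickle k) => [[|y u']|] //.
  case: ifP => // /andP[/eqP hs hB] /(cylE _ y) h.
  by rewrite /at_ /= h ?hs.
apply: mU => k; rewrite /F; case: (unpickle k) => [[|y u']|]; try exact: m0.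
by case: ifP => _; [exact: mcyl | exact: m0].
Qed.

Definition IO (B : {set V}) : set (nat -> V) :=
  \bigcap_N \bigcup_m (if (N <= m)%N then at_ m B else set0).

Lemma IOE B r : IO B r <-> inf_often r B.
Proof.
split.
  move=> h N; case: (h N I) => m _; case: ifP => // hm hr; by exists m.
move=> h N _; case: (h N) => m [hm hr]; exists m => //; by rewrite hm.
Qed.

Lemma mIO B : M (IO B).
Proof.
apply: mI => N; apply: mU => m; case: ifP => _; [exact: mat | exact: m0].
Qed.

Lemma mParity l (B : nat -> {set V}) : M (Parity l B).
Proof.
have -> : Parity l B = \bigcap_i (if (1 <= i <= l)%N && odd i then
   ~` IO (B i) `|` \bigcup_j (if (i < j <= l)%N && ~~ odd j then IO (B j) else set0)
   else setT).
  apply/seteqP; split => r.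
    move=> h i _; case: ifP => // /andP[hi ho].
    case: (pselect (IO (B i) r)) => hIO; last by left.
    right; case: (h i hi ho (proj1 (IOE _ _) hIO)) => j [hj hje hjI].
    by exists j => //; rewrite hj hje; apply/IOE.
  move=> h i hi ho /IOE hIO; move: (h i I); rewrite hi ho /=; case => // -[j _].
  case: ifP => // /andP[hj hje] /IOE hjI; by exists j.
apply: mI => i; case: ifP => _; last exact: mT.
apply: mU2; first by apply: mC; apply: mIO.
apply: mU => j; case: ifP => _; [exact: mIO | exact: m0].
Qed.

Lemma mEvent l (B : nat -> {set V}) i : M (lemma3_event l B i).
Proof.
have -> : lemma3_event l B i = \bigcup_k' ((\bigcap_m (if (k' <= m)%N then ~` at_ m (B i) else setT))
   `|` \bigcup_j (if (i < j <= l)%N && ~~ odd j then at_ k' (B j) else set0)).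
  apply/seteqP; split => r.
    case=> k [k' [_ [h|[j [hj hje hr]]]]]; exists k' => //.
      by left => m _; case: ifP => // hm; apply/negP; apply: h.
    by right; exists j => //; rewrite hj hje.
  case=> k' _ [h|[j _]].
    exists 0%N, k'; split => //; left => m hm.
    by move: (h m I); rewrite hm => /negP.
  case: ifP => // /andP[hj hje] hr.
  by exists 0%N, k'; split => //; right; exists j.
apply: mU => k'; apply: mU2.
  apply: mI => m; case: ifP => _; [apply: mC; exact: mat | exact: mT].
apply: mU => j; case: ifP => _; [exact: mat | exact: m0].
Qed.

Lemma Parity_sub_event l (B : nat -> {set V}) i : (1 <= i <= l)%N -> odd i ->
  Parity l B `<=` lemma3_event l B i.
Proof.
move=> hi ho r h.
case: (pselect (inf_often r (B i))) => hI.
  case: (h i hi ho hI) => j [hj hje hjI].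
  case: (hjI 0%N) => m [_ hm].
  by exists 0%N, m; split => //; right; exists j.
have [N hN] : exists N, forall m, (N <= m)%N -> r m \notin B i.
  apply: contra_notP hI => hn N.
  have /existsNP[m] : ~ forall m, (N <= m)%N -> r m \notin B i.
    by move=> H; apply: hn; exists N.
  move=> /not_implyP[hm /negP /negbNE hr]; by exists m.
by exists 0%N, N; split => //; left.
Qed.
End Meas.

Lemma cvg_uniq (R : realType) (f : nat -> R) (a b : R) :
  f @ \oo --> a -> f @ \oo --> b -> a = b.
Proof. move=> ha hb; exact: (cvg_unique _ ha hb). Qed.

Section Prob.
Variables (R : realType) (V : finType) (P : set (nat -> V) -> R).
Local Notation M := (@run_measurable V).
Hypothesis P1 : P setT = 1.
Hypothesis Pge0 : forall A, M A -> 0 <= P A.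
Hypothesis Padd : forall F : nat -> set (nat -> V), (forall k, M (F k)) ->
        trivIset setT F ->
        (fun n => \sum_(0 <= k < n) P (F k)) @ \oo --> P (\bigcup_k F k).

Lemma P0 : P set0 = 0.
Proof.
have h := @Padd (fun _ => set0) (fun _ => @m0 V) (@trivIset_set0 _ _ setT).
rewrite bigcup0 // in h.
have h2 := h; rewrite -cvg_shiftS in h2.
have := cvgB h2 h; rewrite subrr.
rewrite (@eq_cvg _ _ _ _ (fun _ => P set0)); last first.
  by move=> n; rewrite [LHS]/GRing.add /= big_nat_recr //= addrC addKr.
move=> hc; apply/esym; apply: (@cvg_uniq R (fun _ => P set0)); [exact: hc|exact: cvg_cst].
Qed.

Lemma Padd2 A B : M A -> M B -> A `&` B = set0 -> P (A `|` B) = P A + P B.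
Proof.
move=> hA hB hAB.
pose F (k : nat) := if k == 0%N then A else if k == 1%N then B else set0.
have hF k : M (F k) by rewrite /F; case: ifP => _; [|case: ifP => _]; rewrite //; exact: m0.
have tF : trivIset setT F.
  move=> i j _ _ [x []]; rewrite /F.
  case: i => [|[|i]]; case: j => [|[|j]] //= ha hb.
  - by have : (A `&` B) x by []; rewrite hAB.
  - by have : (A `&` B) x by []; rewrite hAB.
have h := @Padd F hF tF.
have e : \bigcup_k F k = A `|` B.
  apply/seteqP; split => x.
    case=> k _; rewrite /F; case: ifP => _; [by left|case: ifP => _ //; by right].
  by case=> h'; [exists 0%N | exists 1%N].
rewrite e -(cvg_shiftn 2) in h.
apply: (@cvg_uniq R (fun n => \sum_(0 <= k < n + 2) P (F k))); first exact: h.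
rewrite (@eq_cvg _ _ _ _ (fun _ => P A + P B)); first exact: cvg_cst.
elim=> [|n ih] /=.
  by rewrite big_nat_recl // big_nat_recl // big_geq // addr0.
move: ih; rewrite /= addSn big_nat_recr //= => ->.
by rewrite /F addn2 /= P0 addr0.
Qed.

Lemma Pmono A B : M A -> M B -> A `<=` B -> P A <= P B.
Proof.
move=> hA hB hAB.
have -> : B = A `|` (B `\` A).
  by rewrite setDE setUIr setUv setIT; apply/esym/setUidPr.
rewrite Padd2 //; first by rewrite lerDl; apply: Pge0; apply: mD.
- exact: mD.
- by rewrite setDE setICA setICr setI0.
Qed.

Lemma PD A B : M A -> M B -> B `<=` A -> P (A `\` B) = P A - P B.
Proof.
move=> hA hB hBA.
have e : A = B `|` (A `\` B).
  by rewrite setDE setUIr setUv setIT; apply/esym/setUidPr.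
rewrite [in P A]e Padd2 //; first by rewrite addrC addKr.
- exact: mD.
- by rewrite setDE setICA setICr setI0.
Qed.

Lemma Ple1 A : M A -> P A <= 1.
Proof. by move=> hA; rewrite -P1; apply: Pmono => //; exact: mT. Qed.

Lemma PC A : M A -> P (~` A) = 1 - P A.
Proof. by move=> hA; rewrite -setTD PD //; [rewrite P1 | exact: mT]. Qed.
End Prob.

Section Cyl.
Variables (R : realType) (V : finType) (E : rel V) (V0 V1 : {set V}) (pi0 : seq V -> V -> R).
Hypothesis hpi0 : det_memoryless E V0 pi0.

Lemma cylprobE pi1 v x0 xs : cylprob E V0 V1 pi0 pi1 v (x0 :: xs) =
  (x0 == v)%:R * \prod_(0 <= k < size xs)
     step E V0 V1 pi0 pi1 (take k (x0 :: xs)) (nth x0 (x0 :: xs) k) (nth x0 (x0 :: xs) k.+1).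
Proof. by rewrite /cylprob big_mkord. Qed.

Lemma step_shift pi1 p h z y :
  step E V0 V1 pi0 pi1 (p ++ h) z y = step E V0 V1 pi0 (fun s => pi1 (p ++ s)) h z y.
Proof.
case: hpi0 => sg [_ hs]; rewrite /step; case: ifP => hz; first by rewrite !hs.
by rewrite rcons_cat.
Qed.

Lemma cylprob_eq pi1 pi1' v w :
  (forall m, (0 < m < size w)%N -> pi1 (take m w) =1 pi1' (take m w)) ->
  cylprob E V0 V1 pi0 pi1 v w = cylprob E V0 V1 pi0 pi1' v w.
Proof.
case: w => [//|x0 xs] h; rewrite !cylprobE; congr (_ * _).
apply: eq_big_nat => k /andP[_ hk].
rewrite /step; case: ifP => // _; case: ifP => // _.
rewrite -take_nth //=; last by rewrite ltnS ltnW.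
by have := h k.+1; rewrite /= !ltnS hk => /(_ isT (nth x0 xs k)).
Qed.

Lemma prod_split pi1 (s1 : seq V) d x u' : (0 < size s1)%N ->
 \prod_(0 <= k < (size s1).-1 + (size u').+1)
   step E V0 V1 pi0 pi1 (take k (s1 ++ x :: u')) (nth d (s1 ++ x :: u') k) (nth d (s1 ++ x :: u') k.+1) =
 \prod_(0 <= k < size s1)
   step E V0 V1 pi0 pi1 (take k (rcons s1 x)) (nth d (rcons s1 x) k) (nth d (rcons s1 x) k.+1) *
 \prod_(0 <= j < size u')
   step E V0 V1 pi0 (fun s => pi1 (s1 ++ s)) (take j (x :: u')) (nth x (x :: u') j) (nth x (x :: u') j.+1).
Proof.
move=> hs; rewrite addnS -addSn prednK // -cats1.
rewrite (big_cat_nat _ (n := size s1)) //; last by rewrite leq_addr.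
congr (_ * _).
  apply: eq_big_nat => k /andP[_ hk].
  rewrite !take_cat !nth_cat hk.
  case: ltngtP => hk1 //.
    by move: hk1; rewrite ltnS leqNgt hk.
  by rewrite hk1 subnn.
rewrite -[X in \big[_/_]_(X <= _ < _) _]add0n big_addn addKn.
apply: eq_big_nat => j /andP[_ hj].
rewrite !take_cat !nth_cat !ltnNge leq_addl -addSn leq_addl /= !addnK step_shift.
congr step; apply: set_nth_default => //=; rewrite ltnS //; exact: ltnW.
Qed.

Lemma cylprob_cat pi1 v p x u' :
  cylprob E V0 V1 pi0 pi1 v (p ++ x :: u') =
  cylprob E V0 V1 pi0 pi1 v (rcons p x) *
  cylprob E V0 V1 pi0 (fun s => pi1 (p ++ s)) x (x :: u').
Proof.
case: p => [|y ps].
  rewrite cat0s [rcons _ _]/= !cylprobE [size [::]]/= big_nil eqxx mul1r.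
  by rewrite [_ * 1]mulr1.
rewrite cat_cons rcons_cons !cylprobE eqxx mul1r -mulrA; congr (_ * _).
have := @prod_split pi1 (y :: ps) y x u' isT.
by rewrite size_cat size_rcons.
Qed.
End Cyl.

Section Sets.
Variables (V : finType) (p : seq V) (x : V).
Local Notation n := (size p).
Local Notation C := (cyl (rcons p x)).

Definition shiftr (r : nat -> V) : nat -> V := fun k => r (k + n)%N.
Definition gluer (r : nat -> V) : nat -> V :=
  fun k => if (k < n)%N then nth x p k else r (k - n)%N.

Lemma glue_cyl u r : cyl (p ++ u) (gluer r) <-> cyl u r.
Proof.
split.
  move=> /(cylE _ x) h; apply/(cylE _ x) => j hj.
  have := h (j + n)%N; rewrite size_cat addnC ltn_add2l => /(_ hj).
  by rewrite /gluer ltnNge leq_addr /= addKn nth_cat ltnNge leq_addr /= addKn.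
move=> /(cylE _ x) h; apply/(cylE _ x) => k; rewrite size_cat /gluer nth_cat => hk.
case: ifP => // /negbT; rewrite -leqNgt => hk'.
by apply: h; rewrite -(ltn_add2r n) subnK // addnC.
Qed.

Lemma glue_shift r : shiftr (gluer r) = r.
Proof.
by apply: funext => k; rewrite /shiftr /gluer ltnNge leq_addl /= addnK.
Qed.

Lemma io_shift (f : nat -> V) B : inf_often f B <-> inf_often (shiftr f) B.
Proof.
split=> h N.
  case: (h (N + n)%N) => m [hm hf]; exists (m - n)%N; split.
    by lia.
  by rewrite /shiftr subnK //; lia.
case: (h N) => m [hm hf]; exists (m + n)%N; split => //.
by lia.
Qed.

Lemma Parity_glue l B r : Parity l B (gluer r) <-> Parity l B r.
Proof.
have e : forall D, inf_often (gluer r) D <-> inf_often r D.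
  by move=> D; rewrite -{2}(glue_shift r); apply: io_shift.
split=> h i hi ho /e hI; case: (h i hi ho hI) => j [hj hje /e hJ]; by exists j.
Qed.

Lemma glue_C r : C (gluer r) <-> cyl [:: x] r.
Proof. by rewrite -cats1; apply: glue_cyl. Qed.

Lemma trich u : (take n.+1 u = rcons p x) \/ (cyl u `&` C = set0) \/
   (take n.+1 u <> rcons p x /\ C `<=` cyl u).
Proof.
case: (pselect (take n.+1 u = rcons p x)) => he; first by left.
right.
case: (pselect (exists k, [/\ (k < size u)%N, (k < n.+1)%N & nth x u k != nth x (rcons p x) k])).
  case=> k [hk1 hk2 hne]; left; apply/seteqP; split => // r [] /(cylE _ x) h1 /(cylE _ x) h2.
  by move: hne; rewrite -h1 // -h2 ?size_rcons // eqxx.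
move=> hno; right; split => // r /(cylE _ x) h; apply/(cylE _ x) => k hk.
case: (leqP (size u) n) => hs.
  rewrite h ?size_rcons; last by lia.
  apply/eqP; apply: contra_notT hno => hne; exists k; split => //; [lia | by rewrite eq_sym].
exfalso; apply: he; apply: (@eq_from_nth _ x).
  by rewrite size_take size_rcons; case: ifP => //; lia.
move=> j hj.
have hj1 : (j < n.+1)%N by move: hj; rewrite size_take; case: ifP; lia.
rewrite nth_take //; apply/eqP; apply: contra_notT hno => hne.
exists j; split; [lia|lia|exact: hne].
Qed.

Lemma ext_cat u : take n.+1 u = rcons p x -> u = p ++ x :: drop n.+1 u.
Proof. by move=> h; rewrite -cat_rcons -h cat_take_drop. Qed.
End Sets.

Definition shiftn (V : Type) m (r : nat -> V) : nat -> V := fun k => r (k + m)%N.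

Lemma cyl_cat (V : finType) (s t : seq V) r : cyl (s ++ t) r <-> cyl s r /\ cyl t (shiftn (size s) r).
Proof.
case: (pselect (exists d : V, True)) => [[d _]|hV]; last first.
  by exfalso; apply: hV; exists (r 0%N).
split.
  move=> /(cylE _ d) h; split; apply/(cylE _ d) => k hk.
    by rewrite h ?size_cat ?nth_cat ?hk //; lia.
  by rewrite /shiftn h ?size_cat ?nth_cat; [rewrite ifN ?addnK //; lia | lia].
case=> /(cylE _ d) h1 /(cylE _ d) h2; apply/(cylE _ d) => k; rewrite size_cat nth_cat => hk.
case: ifP => hks; first exact: h1.
have := h2 (k - size s)%N; rewrite /shiftn subnK; last by lia.
by apply; lia.
Qed.

Lemma meas_class (V : finType) (X : set (set (nat -> V))) : sigma_algebra setT X ->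
  (forall u, X (cyl u)) -> forall A, run_measurable A -> X A.
Proof.
move=> hX hG A hA; apply: (smallest_sub hX _ hA) => _ [u _ <-]; exact: hG.
Qed.

Lemma cyl_head (V : finType) (y : V) u' q : cyl (y :: u') q -> q 0%N = y.
Proof. by move=> /(cylE _ y) h; rewrite h. Qed.

Lemma cyl1 (V : finType) (y : V) q : cyl [:: y] q <-> q 0%N = y.
Proof.
split; first exact: cyl_head.
by move=> h; apply/(cylE _ y) => -[|k] //= _.
Qed.

Lemma cyl_take (V : finType) (u : seq V) m : cyl u `<=` cyl (take m u).
Proof.
case: u => [|y u'] r; first by case: m => [|m] _ k.
move=> /(cylE _ y) h; apply/(cylE _ y) => k; rewrite size_take => hk.
rewrite nth_take; last by move: hk; case: ifP => //; lia.
by apply: h; move: hk; case: ifP; lia.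
Qed.

Section QSec.
Variables (R : realType) (V : finType) (E : rel V) (V0 V1 : {set V}) (pi0 : seq V -> V -> R).
Hypothesis hpi0 : det_memoryless E V0 pi0.
Variables (p : seq V) (x v0 : V) (pi1 : seq V -> V -> R) (P : set (nat -> V) -> R).
Hypothesis hpi1 : strategy E V1 pi1.
Hypothesis hP : run_measure E V0 V1 pi0 pi1 v0 P.
Local Notation M := (@run_measurable V).
Local Notation C := (cyl (rcons p x)).
Local Notation c := (P C).
Hypothesis hc : 0 < c.

Definition pi1Q := fun s => pi1 (p ++ s).
Definition Q (A : set (nat -> V)) := P (C `&` (shiftr p @^-1` A)) / c.

Lemma strat_Q : strategy E V1 pi1Q.
Proof. by move=> h z hz; rewrite /pi1Q -rcons_cat; apply: hpi1. Qed.

Lemma C_shift_cyl u : C `&` (shiftr p @^-1` cyl u) =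
  match u with [::] => C | y :: u' => if y == x then cyl (p ++ u) else set0 end.
Proof.
have eC : forall r, C r <-> cyl p r /\ cyl [:: x] (shiftr p r).
  by move=> r; rewrite -cats1; apply: cyl_cat.
apply/seteqP; split => r.
  case=> /eC [h1 h2] h3; case: u h3 => [|y u'] h3; first by apply/eC.
  have hy := cyl_head h3; move/cyl1: h2; rewrite hy => hyx; subst y; rewrite hyx eqxx; rewrite hyx in h3.
  by apply/cyl_cat; split; [exact: h1 | exact: h3].
case: u => [|y u']; first by move=> h; split.
case: ifP => // /eqP -> /cyl_cat [h1 h2]; split => //.
by apply/eC; split => //; apply/cyl1; apply: (cyl_head h2).
Qed.

Lemma MQ A : M A -> M (C `&` (shiftr p @^-1` A)).
Proof.
apply: (@meas_class V (fun A => M (C `&` (shiftr p @^-1` A)))).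
  split.
  - by rewrite preimage_set0 setI0; exact: m0.
  - move=> B hB; rewrite setTD preimage_setC.
    have -> : C `&` ~` (shiftr p @^-1` B) = C `\` (C `&` (shiftr p @^-1` B)).
      by rewrite setDIr setDv set0U setDE.
    by apply: mD => //; exact: mcyl.
  - move=> F hF; rewrite preimage_bigcup setI_bigcupr; exact: mU.
move=> u; rewrite C_shift_cyl; case: u => [|y u']; first exact: mcyl.
case: ifP => _; [exact: mcyl | exact: m0].
Qed.

Lemma run_measure_Q : run_measure E V0 V1 pi0 pi1Q x Q.
Proof.
case: hP => P1 Pge0 Padd Pcyl.
have hc0 : c != 0 by rewrite gt_eqF.
split.
- by rewrite /Q preimage_setT setIT divff.
- by move=> A hA; apply: divr_ge0; [apply: Pge0; exact: MQ | exact: ltW].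
- move=> F hF tF.
  have := @Padd (fun k => C `&` (shiftr p @^-1` F k)) (fun k => MQ (hF k)) _.
  rewrite -setI_bigcupr -preimage_bigcup => h.
  rewrite /Q; under eq_fun => n do rewrite -mulr_suml.
  apply: cvgMr_tmp; apply: h.
  move=> i j _ _ [r [[_ hi] [_ hj]]]; apply: tF => //; by exists (shiftr p r).
- move=> u; rewrite /Q C_shift_cyl; case: u => [|y u'].
    by rewrite divff.
  case: ifP => [/eqP ->|hne].
    rewrite Pcyl cylprob_cat // -Pcyl mulrC mulKf //.
  by rewrite P0 // mul0r /cylprob hne mul0r.
Qed.
End QSec.

Section PSec.
Variables (R : realType) (V : finType) (E : rel V) (V0 V1 : {set V}) (pi0 : seq V -> V -> R).
Hypothesis hpi0 : det_memoryless E V0 pi0.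
Variables (p : seq V) (x v0 : V) (pi1 : seq V -> V -> R) (P : set (nat -> V) -> R).
Hypothesis hpi1 : strategy E V1 pi1.
Hypothesis hP : run_measure E V0 V1 pi0 pi1 v0 P.
Variables (pi1x : seq V -> V -> R) (P' : set (nat -> V) -> R).
Hypothesis hpi1x : strategy E V1 pi1x.
Hypothesis hP' : run_measure E V0 V1 pi0 pi1x x P'.
Local Notation M := (@run_measurable V).
Local Notation n := (size p).
Local Notation C := (cyl (rcons p x)).
Local Notation c := (P C).
Hypothesis hc : 0 < c.

Definition pi1G := fun s => if take n.+1 s == rcons p x then pi1x (drop n s) else pi1 s.
Definition PG (A : set (nat -> V)) := P (A `\` C) + c * P' (gluer p x @^-1` (A `&` C)).

Lemma strat_G : strategy E V1 pi1G.
Proof.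
move=> h z hz; rewrite /pi1G; case: ifP => [/eqP he|_]; last exact: hpi1.
have hs : (n <= size h)%N.
  have := congr1 size he; rewrite size_take !size_rcons.
  by case: ltnP => H1 H2; [exact: ltnW H1 | case: H2 => ->].
rewrite drop_rcons //; exact: hpi1x.
Qed.

Lemma glueC : gluer p x @^-1` C = cyl [:: x].
Proof. by apply/seteqP; split => r h; [exact: (proj1 (glue_C p x r) h) | exact: (proj2 (glue_C p x r) h)]. Qed.

Lemma MG A : M A -> M (gluer p x @^-1` (A `&` C)).
Proof.
apply: (@meas_class V (fun A => M (gluer p x @^-1` (A `&` C)))).
  split.
  - by rewrite set0I preimage_set0; exact: m0.
  - move=> B hB; rewrite setTD.
    have -> : ~` B `&` C = C `\` (B `&` C) by rewrite setDIr setDv setU0 setDE setIC.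
    rewrite setDE preimage_setI -preimage_setC -setDE glueC; apply: mD => //; exact: mcyl.
  - move=> F hF; rewrite setI_bigcupl preimage_bigcup; exact: mU.
move=> u; case: (trich p x u) => [he|[hd|[_ hs]]].
- rewrite (ext_cat he).
  have -> : cyl (p ++ x :: drop n.+1 u) `&` C = cyl (p ++ x :: drop n.+1 u).
    apply/setIidPl; rewrite -(ext_cat he) -he; exact: cyl_take.
  have -> : gluer p x @^-1` cyl (p ++ x :: drop n.+1 u) = cyl (x :: drop n.+1 u).
    by apply/seteqP; split => r h; [exact: (proj1 (glue_cyl p x _ r) h) | exact: (proj2 (glue_cyl p x _ r) h)].
  exact: mcyl.
- rewrite hd preimage_set0; exact: m0.
- have -> : cyl u `&` C = C by apply/setIidPr.
  rewrite glueC; exact: mcyl.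
Qed.

Lemma notext_eq u : take n.+1 u <> rcons p x ->
  cylprob E V0 V1 pi0 pi1G v0 u = cylprob E V0 V1 pi0 pi1 v0 u.
Proof.
move=> hne; apply: cylprob_eq => m /andP[hm0 hmu] z; rewrite /pi1G ifN //.
apply/eqP => he; case: (leqP n.+1 m) => hm.
  by apply: hne; rewrite take_takel in he.
have hs : size (take m u) = m by rewrite size_takel // ltnW.
rewrite take_oversize in he; last by rewrite hs ltnW.
by have := congr1 size he; rewrite hs size_rcons => hh; rewrite hh ltnn in hm.
Qed.

Lemma ext_eq u' :
  cylprob E V0 V1 pi0 pi1G v0 (p ++ x :: u') = c * cylprob E V0 V1 pi0 pi1x x (x :: u').
Proof.
case: hP => _ _ _ Pcyl.
rewrite (cylprob_cat _ hpi0) Pcyl; congr (_ * _).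
  apply: cylprob_eq => m /andP[hm0 hmu] z; rewrite /pi1G ifN //.
  rewrite size_rcons in hmu.
  have hs : size (take m (rcons p x)) = m by rewrite size_takel // size_rcons ltnW.
  rewrite take_oversize; last by rewrite hs ltnW.
  by apply/eqP => he; have := congr1 size he; rewrite hs size_rcons => hh; rewrite hh ltnn in hmu.
apply: cylprob_eq => m /andP[hm0 hmu] z; rewrite /pi1G.
have -> : take n.+1 (p ++ take m (x :: u')) = rcons p x.
  rewrite take_cat ltnNge leqnSn /= subSnn; case: m hm0 {hmu} => // m _ /=.
  by rewrite take0 cats1.
by rewrite eqxx drop_size_cat.
Qed.

Lemma cylx1 : cylprob E V0 V1 pi0 pi1x x [:: x] = 1.
Proof. by rewrite /cylprob /= eqxx big_ord0 mulr1. Qed.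


Lemma run_measure_G : run_measure E V0 V1 pi0 pi1G v0 PG.
Proof.
have hP2 := hP; have hP'2 := hP'.
case: hP2 => P1 Pge0 Padd Pcyl; case: hP'2 => P'1 P'ge0 P'add P'cyl.
have MC : M C by exact: mcyl.
split.
- rewrite /PG setTD (PC P1 Padd MC) setTI glueC P'cyl cylx1 mulr1.
  by rewrite subrK.
- move=> A hA; rewrite /PG; apply: addr_ge0; first by apply: Pge0; apply: mD.
  by apply: mulr_ge0; [exact: ltW | apply: P'ge0; apply: MG].
- move=> F hF tF.
  have h1 := @Padd (fun k => F k `\` C) (fun k => mD (hF k) MC) _.
  have h2 := @P'add (fun k => gluer p x @^-1` (F k `&` C)) (fun k => MG (hF k)) _.
  have e1 : \bigcup_k (F k `\` C) = (\bigcup_k F k) `\` C.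
    by apply/seteqP; split => r; [case=> k _ [h1' h2']; split => //; exists k | case=> [[k _ h1'] h2']; exists k].
  have e2 : \bigcup_k (gluer p x @^-1` (F k `&` C)) = gluer p x @^-1` ((\bigcup_k F k) `&` C).
    by rewrite setI_bigcupl preimage_bigcup.
  rewrite e1 in h1; rewrite e2 in h2.
  rewrite (@eq_cvg _ _ _ _ ((fun m => \sum_(0 <= k < m) P (F k `\` C)) +
     (fun m => c * \sum_(0 <= k < m) P' (gluer p x @^-1` (F k `&` C))))); last first.
    by move=> m; rewrite [RHS]/GRing.add /= big_split /= mulr_sumr.
  rewrite /PG; apply: cvgD; first apply: h1.
    by move=> i j _ _ [r [[hi _] [hj _]]]; apply: tF => //; exists r.
  apply: cvgMl_tmp; apply: h2.
  by move=> i j _ _ [r [[hi _] [hj _]]]; apply: tF => //; exists (gluer p x r).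
- move=> u; case: (pselect (take n.+1 u = rcons p x)) => he.
    rewrite (ext_cat he) ext_eq /PG -(ext_cat he).
    have hsub : cyl u `<=` C by rewrite -he; exact: cyl_take.
    have -> : cyl u `\` C = set0 by apply/seteqP; split => // r [/hsub].
    have -> : cyl u `&` C = cyl u by apply/setIidPl.
    rewrite P0 // add0r; congr (_ * _); rewrite -P'cyl; congr P'.
    rewrite {1}(ext_cat he).
    by apply/seteqP; split => r h; [exact: (proj1 (glue_cyl p x _ r) h) | exact: (proj2 (glue_cyl p x _ r) h)].
  rewrite notext_eq // -Pcyl /PG.
  case: (trich p x u) => [//|[hd|[_ hs]]].
    have -> : cyl u `\` C = cyl u.
      apply/seteqP; split => r; first by case.
      move=> h; split => // hC; have : (cyl u `&` C) r by []. by rewrite hd.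
    by rewrite hd preimage_set0 (P0 P'add) mulr0 addr0.
  have -> : cyl u `&` C = C by apply/setIidPr.
  rewrite glueC P'cyl cylx1 mulr1 (PD Padd (mcyl _) MC hs) subrK //.
Qed.

Lemma PG_parity l B : PG (Parity l B) = P (Parity l B `\` C) + c * P' (Parity l B `&` cyl [:: x]).
Proof.
rewrite /PG preimage_setI glueC; congr (_ + _ * P' (_ `&` _)).
by apply/seteqP; split => r h; [exact: (proj1 (Parity_glue p x l B r) h) | exact: (proj2 (Parity_glue p x l B r) h)].
Qed.

Lemma key l B i : (1 <= i <= l)%N -> odd i -> 1 <= PG (Parity l B) ->
  P' (lemma3_event l B i) = 1.
Proof.
move=> hi ho h.
have hP2 := hP; have hP'2 := hP'.
case: hP2 => P1 Pge0 Padd Pcyl; case: hP'2 => P'1 P'ge0 P'add P'cyl.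
have MC : M C by exact: mcyl.
have MPa := mParity l B.
have h1 : P (Parity l B `\` C) <= 1 - c.
  rewrite -(PC P1 Padd MC); apply: (Pmono Pge0 Padd); [exact: mD | exact: mC | by move=> r []].
have h2 : P' (Parity l B `&` cyl [:: x]) <= P' (lemma3_event l B i).
  apply: (Pmono P'ge0 P'add); [exact: mI2 (mcyl _) | exact: mEvent |].
  by move=> r [hr _]; apply: Parity_sub_event.
have h3 := Ple1 P'1 P'ge0 P'add (mEvent l B i).
rewrite PG_parity in h.
apply: le_anti; rewrite h3 /=.
have : c * 1 <= c * P' (lemma3_event l B i).
  rewrite mulr1; apply: (le_trans _ (ler_wpM2l (ltW hc) h2)).
  by move: (le_trans h (lerD h1 (lexx _))); rewrite -lerBlDl opprB addrC subrK.
by rewrite ler_pM2l.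
Qed.
End PSec.

Unset Implicit Arguments. Set Strict Implicit.

Theorem lemma3 (R : realType) (V : finType) (E : rel V) (V0 V1 Vr : {set V})
  (l : nat) (B : nat -> {set V}) (v0 : V) (pi0 : seq V -> V -> R) :
  game_graph E V0 V1 Vr ->
  parity_condition E l B ->
  det_memoryless E V0 pi0 ->
  inf (prob_values E V0 V1 pi0 v0 (Parity l B)) = 1 ->
  forall ws : seq V,
    (exists pi1, strategy E V1 pi1 /\
       exists P, run_measure E V0 V1 pi0 pi1 v0 P /\ 0 < P (cyl (v0 :: ws))) ->
  forall i : nat, (1 <= i <= l)%N -> odd i ->
    last v0 ws \in B i ->
    inf (prob_values E V0 V1 pi0 (last v0 ws) (lemma3_event l B i)) = 1.
Proof.
move=> _ _ hpi0 hinf ws [pi1 [hpi1 [P [hP hc]]]] i hi ho _.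
rewrite lastI in hc.
set p := belast v0 ws in hc *; set x := last v0 ws in hc *.
have lb : has_lbound (prob_values E V0 V1 pi0 v0 (Parity l B)).
  exists 0 => z [pi1' [_ [P'' [hP'' ->]]]].
  by case: hP'' => _ Pge0 _ _; apply: Pge0; apply: mParity.
have hall : forall y, prob_values E V0 V1 pi0 x (lemma3_event l B i) y -> y = 1.
  move=> y [pi1x [hpi1x [P' [hP' ->]]]].
  apply: (key hP hP' hc hi ho).
  rewrite -hinf; apply: ge_inf => //.
  exists (pi1G p x pi1 pi1x); split; first exact: strat_G.
  by eexists; split; first exact: (run_measure_G hpi0 hP hP' hc).
have hQ : prob_values E V0 V1 pi0 x (lemma3_event l B i) (Q p x P (lemma3_event l B i)).
  exists (pi1Q p pi1); split; first exact: strat_Q.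
  by eexists; split; first exact: (run_measure_Q hpi0 hP hc).
have -> : prob_values E V0 V1 pi0 x (lemma3_event l B i) = [set 1].
  apply/seteqP; split => y; first exact: hall.
  by move=> ->; rewrite -(hall _ hQ).
exact: inf1.
Qed.
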